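(* Let $\mathsf N>1$, $p\in(2,6)$, $\theta\in(\vartheta(p,3),1)$ and $\beta=1-\frac{p-2}{2p\theta}$. Then the equation $\theta(6-p)\big(x^\beta-\mathsf N\big)x-\big(2p\theta-3(p-2)\big)\Big(\theta\big(x^\beta-\mathsf N\big)+(1-\theta)(x-1)\mathsf N\Big)=0$ has a unique root in the interval $(\mathsf N^{1/\beta},\infty)$.
   Context: $\vartheta(p,3)=\frac{3(p-2)}{2p}$. *)

(* Defs.v *)
From Stdlib Require Import Reals.
Open Scope R_scope.

Definition vartheta3 (p : R) : R := 3 * (p - 2) / (2 * p).

Definition beta (p theta : R) : R := 1 - (p - 2) / (2 * p * theta).

Definition F (N p theta x : R) : R :=
  theta * (6 - p) * (Rpower x (beta p theta) - N) * x
  - (2 * p * theta - 3 * (p - 2)) *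
    (theta * (Rpower x (beta p theta) - N) + (1 - theta) * (x - 1) * N).

(* Main.v *)
Require Import Defs.
From Stdlib Require Import Reals Lra.
From Coquelicot Require Import Coquelicot.
Open Scope R_scope.

Lemma Rpow_der (b x : R) : 0 < x -> is_derive (fun y => Rpower y b) x (b * Rpower x (b - 1)).
Proof. intros Hx. apply is_derive_Reals. now apply derivable_pt_lim_power. Qed.

Definition dF (N p th x : R) : R :=
  let b := beta p th in
  th * (6 - p) * (b * Rpower x (b - 1)) * x + th * (6 - p) * (Rpower x b - N)
  - (2 * p * th - 3 * (p - 2)) * (th * (b * Rpower x (b - 1)) + (1 - th) * N).

Lemma F_der (N p th x : R) : 0 < x -> is_derive (F N p th) x (dF N p th x).
Proof.
  intros Hx. unfold F, dF.
  auto_derive.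
  - split; [exists (beta p th * Rpower x (beta p th - 1)); now apply Rpow_der|].
    split; [exists (beta p th * Rpower x (beta p th - 1)); now apply Rpow_der|]. easy.
  - replace (Derive (fun x0 : R => Rpower x0 (beta p th)) x)
      with (beta p th * Rpower x (beta p th - 1)); [ring|].
    symmetry; apply is_derive_unique, Rpow_der; exact Hx.
Qed.

Lemma F_cont (N p th x : R) : 0 < x -> continuity_pt (F N p th) x.
Proof.
  intros Hx. apply derivable_continuous_pt. exists (dF N p th x).
  apply is_derive_Reals. now apply F_der.
Qed.

Lemma Rpower_mul_self (x b : R) : 0 < x -> Rpower x (b - 1) * x = Rpower x b.
Proof.
  intros Hx. rewrite <- (Rpower_1 x) at 2 by exact Hx.
  rewrite <- Rpower_plus. f_equal. ring.
Qed.

Lemma dF_mono (N p th u v : R) : 2 < p < 6 -> 0 < th ->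
  0 < beta p th < 1 -> 0 < 2 * p * th - 3 * (p - 2) ->
  0 < u <= v -> dF N p th u <= dF N p th v.
Proof.
  intros Hp Hth Hb Hc Huv. unfold dF.
  set (b := beta p th) in *. set (c := 2 * p * th - 3 * (p - 2)) in *.
  assert (Eu : th * (6 - p) * (b * Rpower u (b - 1)) * u = th * (6-p) * b * Rpower u b).
  { rewrite <- (Rpower_mul_self u b) by lra. ring. }
  assert (Ev : th * (6 - p) * (b * Rpower v (b - 1)) * v = th * (6-p) * b * Rpower v b).
  { rewrite <- (Rpower_mul_self v b) by lra. ring. }
  rewrite Eu, Ev.
  assert (H1 : Rpower u b <= Rpower v b) by (apply Rle_Rpower_l; lra).
  assert (H2 : Rpower v (b - 1) <= Rpower u (b - 1)).
  { replace (b - 1) with (- (1 - b)) by ring. rewrite !Rpower_Ropp.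
    apply Rinv_le_contravar. unfold Rpower; apply exp_pos.
    apply Rle_Rpower_l; lra. }
  assert (0 < th * (6 - p)) by (apply Rmult_lt_0_compat; lra).
  assert (0 < th * (6 - p) * b) by (apply Rmult_lt_0_compat; lra).
  assert (0 < c * th * b) by (apply Rmult_lt_0_compat; [apply Rmult_lt_0_compat|]; lra).
  nra.
Qed.

Theorem lemma2 (N p theta : R) :
  1 < N -> 2 < p < 6 -> vartheta3 p < theta < 1 ->
  exists! x : R, Rpower N (1 / beta p theta) < x /\ F N p theta x = 0.
Proof.
  intros HN Hp Hth. unfold vartheta3 in Hth.
  assert (Hc : 0 < 2 * p * theta - 3 * (p - 2)).
  { assert (E : 3 * (p - 2) / (2 * p) * (2 * p) = 3 * (p - 2)) by (field; lra).
    nra. }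
  assert (Ht0 : 0 < theta).
  { destruct (Rle_or_lt theta 0); [|lra]. assert (p * theta <= 0) by nra. lra. }
  assert (Hb : 0 < beta p theta < 1).
  { unfold beta. assert (E : (p - 2) / (2 * p * theta) * (2 * p * theta) = p - 2)
      by (field; lra).
    set (q := (p - 2) / (2 * p * theta)) in *.
    assert (0 < q) by (unfold q; apply Rdiv_lt_0_compat; nra).
    nra. }
  set (b := beta p theta) in *.
  set (x0 := Rpower N (1 / b)).
  assert (Hx0 : 1 < x0).
  { unfold x0. assert (H0 : Rpower N 0 < Rpower N (1 / b)).
    { apply Rpower_lt; [lra|]. apply Rdiv_lt_0_compat; lra. }
    rewrite Rpower_O in H0 by lra. exact H0. }
  assert (Hx0b : Rpower x0 b = N).
  { unfold x0. rewrite Rpower_mult. replace (1 / b * b) with 1 by (field; lra).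
    apply Rpower_1; lra. }
  set (a := theta * (6 - p)).
  set (c := 2 * p * theta - 3 * (p - 2)) in *.
  assert (Ha : 0 < a) by (unfold a; apply Rmult_lt_0_compat; lra).
  assert (HF0 : F N p theta x0 < 0).
  { unfold F. fold b. rewrite Hx0b. fold c.
    assert (0 < c * (1 - theta) * (x0 - 1) * N).
    { repeat apply Rmult_lt_0_compat; lra. }
    nra. }
  set (K := a * N + c * (1 - theta) * N).
  assert (HK : 0 < K).
  { unfold K. assert (0 < c * (1 - theta) * N) by (repeat apply Rmult_lt_0_compat; lra).
    nra. }
  set (r := Rpower (2 * K / a) (1 / b)).
  assert (Hr : 0 < r) by (unfold r, Rpower; apply exp_pos).
  assert (Hca : 0 <= 2 * c * theta / a) by (apply Rlt_le, Rdiv_lt_0_compat; nra).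
  set (M := x0 + 2 * c * theta / a + r + 1).
  assert (HM : x0 < M) by (unfold M; lra).
  assert (HaM : 2 * c * theta <= a * M).
  { assert (E : 2 * c * theta / a * a = 2 * c * theta) by (field; lra).
    unfold M. nra. }
  assert (HMb : 2 * K / a <= Rpower M b).
  { assert (E : Rpower r b = 2 * K / a).
    { unfold r. rewrite Rpower_mult. replace (1 / b * b) with 1 by (field; lra).
      apply Rpower_1. apply Rdiv_lt_0_compat; lra. }
    rewrite <- E. apply Rle_Rpower_l; [lra|]. unfold M; lra. }
  assert (HFM : 0 < F N p theta M).
  { unfold F. fold b. fold c. fold a.
    assert (E : 2 * K / a * a = 2 * K) by (field; lra).
    assert (0 < c * N) by (apply Rmult_lt_0_compat; lra).
    set (P := Rpower M b) in *.
    assert (P * (a * M - c * theta) >= K * M).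
    { assert (a * M - c * theta >= a * M / 2) by lra.
      assert (0 < 2 * K / a) by (apply Rdiv_lt_0_compat; lra).
      assert (0 <= P) by lra.
      assert (P * (a * M - c * theta) >= P * (a * M / 2)) by nra.
      assert (P * a >= 2 * K) by nra.
      nra. }
    unfold K in *. nra. }
  destruct (Ranalysis5.IVT_interv (F N p theta) x0 M) as [z [Hz Fz]].
  - intros y Hy. apply F_cont. lra.
  - exact HM.
  - exact HF0.
  - exact HFM.
  - exists z. assert (Hzx : x0 < z).
    { destruct (Req_dec z x0) as [->|]; [lra|lra]. }
    split; [split; assumption|].
    intros w [Hw Fw].
    assert (key : forall u v, x0 < u -> u < v -> F N p theta u = 0 ->
                  F N p theta v = 0 -> False).
    { intros u v Hu Huv Fu Fv.
      destruct (MVT_gen (F N p theta) x0 u (dF N p theta)) as [c1 [Hc1 E1]].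
      { intros y Hy. apply F_der. rewrite Rmin_left in Hy by lra. lra. }
      { intros y Hy. apply F_cont. rewrite Rmin_left in Hy by lra. lra. }
      destruct (MVT_gen (F N p theta) u v (dF N p theta)) as [c2 [Hc2 E2]].
      { intros y Hy. apply F_der. rewrite Rmin_left in Hy by lra. lra. }
      { intros y Hy. apply F_cont. rewrite Rmin_left in Hy by lra. lra. }
      rewrite Rmin_left, Rmax_right in Hc1 by lra.
      rewrite Rmin_left, Rmax_right in Hc2 by lra.
      assert (D1 : 0 < dF N p theta c1).
      { assert (0 < dF N p theta c1 * (u - x0)) by lra.
        destruct (Rle_or_lt (dF N p theta c1) 0); [|lra]. nra. }
      assert (D2 : dF N p theta c2 = 0).
      { assert (dF N p theta c2 * (v - u) = 0) by lra.
        apply Rmult_integral in H. destruct H; lra. }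
      assert (dF N p theta c1 <= dF N p theta c2).
      { apply dF_mono; try lra; [exact Hb|exact Hc]. }
      lra. }
    destruct (Rtotal_order z w) as [H|[H|H]].
    + exfalso. apply (key z w); assumption.
    + exact H.
    + exfalso. apply (key w z); assumption.
Qed.
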